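(* Let $G$ be a finite abelian group and let $\rho\ge2$ be an integer. Then $$t_\rho(G)\le\left\lfloor\frac{|G|-2}{\rho-1}\right\rfloor+1.$$
   Context: Groups are written additively. For $A\subseteq G$ let $A_0:=A\cup\{0\}$ and $\langle A\rangle^+_\rho:=\rho A_0=\{a_1+\dots+a_\rho:a_i\in A_0\}$. $\operatorname{diam}^+_A(G):=\min\{\rho\in\mathbb{N}_0:\langle A\rangle^+_\rho=G\}$ ($\min\varnothing=\infty$). The period of $S\subseteq G$ is $\pi(S):=\{g\in G:S+g=S\}$; $S$ is aperiodic if $\pi(S)=\{0\}$. A subset $A\subseteq G$ is $\rho$-maximal if it is maximal under inclusion subject to $\operatorname{diam}^+_A(G)\ge\rho$, i.e. subject to $\langle A\rangle^+_{\rho-1}\neq G$. With the convention $\max\varnothing=0$: $t_\rho(G):=\max\{|A|: A \text{ is an aperiodic } \rho\text{-maximal generating set for } G\}$. *)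

(* Defs.v *)
From HB Require Import structures.
From mathcomp Require Import all_boot all_order all_algebra all_fingroup.
Set Implicit Arguments. Unset Strict Implicit. Unset Printing Implicit Defensive.
Import GRing.Theory.
Local Open Scope ring_scope.

Section Defs.
Variable G : finZmodType.

Definition A0 (A : {set G}) : {set G} := 0 |: A.

(* <A>^+_rho := rho A_0, with 0 A_0 = {0} *)
Fixpoint sumset (rho : nat) (A : {set G}) : {set G} :=
  match rho with
  | O => [set 0]
  | r.+1 => [set x + a | x in sumset r A, a in A0 A]
  end.

(* diam^+_A(G) >= rho  <->  <A>^+_(rho-1) <> G  (sumsets are increasing) *)
Definition rho_maximal (rho : nat) (A : {set G}) : bool :=
  (sumset rho.-1 A != [set: G]) &&
  [forall B : {set G}, (A \proper B) ==> (sumset rho.-1 B == [set: G])].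

Definition period (S : {set G}) : {set G} := [set g | [set s + g | s in S] == S].
Definition aperiodic (S : {set G}) : bool := period S == [set 0].

Definition generating (A : {set G}) : bool :=
  [forall B : {set G}, ((0 \in B) && [forall x in B, forall y in B, x - y \in B]
                        && (A \subset B)) ==> (B == [set: G])].

(* t_rho(G), with max of empty = 0 *)
Definition t_rho (rho : nat) : nat :=
  \max_(A : {set G} | [&& aperiodic A, rho_maximal rho A & generating A]) #|A|.
End Defs.

(* Main.v *)
Require Import Defs.
From HB Require Import structures.
From mathcomp Require Import all_boot all_order all_algebra all_fingroup.
Import GRing.Theory.
From Stdlib Require Import Lia.
Set Implicit Arguments. Unset Strict Implicit. Unset Printing Implicit Defensive.

Ltac mlia := repeat match goal with
  | H : is_true (leq _ _) |- _ => move/leP: H => H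
  | |- is_true (leq _ _) => apply/leP
  end; unfold addn, subn, muln in *; lia.

Local Open Scope ring_scope.
Section Base.
Variable G : finZmodType.
Implicit Types A B C D S P X Y K : {set G}.

Definition sadd A B : {set G} := [set x + y | x in A, y in B].
Definition stab S : {set G} := [set g | [set s + g | s in S] == S].

Lemma saddP A B x : reflect (exists2 a, a \in A & exists2 b, b \in B & x = a + b) (x \in sadd A B).
Proof.
apply: (iffP idP) => [/imset2P[a b ha hb ->]|[a ha [b hb ->]]]; last exact: imset2_f.
by exists a => //; exists b.
Qed.

Lemma sadd_mem A B a b : a \in A -> b \in B -> a + b \in sadd A B.
Proof. by move=> ha hb; apply: imset2_f. Qed.

Lemma saddS A A' B B' : A \subset A' -> B \subset B' -> sadd A B \subset sadd A' B'.
Proof.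
move=> sA sB; apply/subsetP=> x /saddP[a ha [b hb ->]].
by apply: sadd_mem; [apply: (subsetP sA)|apply: (subsetP sB)].
Qed.

Lemma saddC A B : sadd A B = sadd B A.
Proof.
by apply/setP=> x; apply/saddP/saddP=> -[a ha [b hb ->]]; exists b => //; exists a => //; rewrite addrC.
Qed.

Lemma saddA A B C : sadd A (sadd B C) = sadd (sadd A B) C.
Proof.
apply/setP=> x; apply/saddP/saddP.
- move=> [a ha [y /saddP[b hb [c hc ->]] ->]].
  by exists (a + b); [apply: sadd_mem|exists c => //; rewrite addrA].
- move=> [y /saddP[a ha [b hb ->]] [c hc ->]].
  by exists a => //; exists (b + c); [apply: sadd_mem|rewrite addrA].
Qed.

Lemma sadd0s B : sadd set0 B = set0.
Proof. by apply/setP=> x; rewrite inE; apply/saddP=> -[a]; rewrite inE. Qed.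

Lemma sadds0 A : sadd A set0 = set0.
Proof. by rewrite saddC sadd0s. Qed.

Lemma sadd_eq0 A B : (sadd A B == set0) = (A == set0) || (B == set0).
Proof.
case: (set_0Vmem A) => [->|[a ha]]; first by rewrite sadd0s !eqxx.
case: (set_0Vmem B) => [->|[b hb]]; first by rewrite sadds0 !eqxx orbT.
have : a + b \in sadd A B by apply: sadd_mem.
by case: eqP => [->|_]; rewrite ?inE // => _; apply/esym/norP; split; apply/set0Pn; [exists a|exists b].
Qed.

Lemma sadd1 A g : sadd A [set g] = [set a + g | a in A].
Proof.
apply/setP=> x; apply/saddP/imsetP.
- by move=> [a ha [b]]; rewrite inE => /eqP -> ->; exists a.
- by move=> [a ha ->]; exists a => //; exists g; rewrite ?inE.
Qed.

Lemma card_tr A g : #|[set a + g | a in A]| = #|A|.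
Proof. by apply: card_imset; apply: addIr. Qed.

Lemma card_sadd1 A g : #|sadd A [set g]| = #|A|.
Proof. by rewrite sadd1 card_tr. Qed.

Lemma card1sadd A g : #|sadd [set g] A| = #|A|.
Proof. by rewrite saddC card_sadd1. Qed.

Lemma leq_card_sadd A B b : b \in B -> (#|A| <= #|sadd A B|)%N.
Proof.
move=> hb; rewrite -(card_sadd1 A b); apply: subset_leq_card.
by apply: saddS => //; rewrite sub1set.
Qed.

Lemma stabP S g : reflect (forall s, s \in S -> s + g \in S) (g \in stab S).
Proof.
rewrite inE; apply: (iffP eqP) => [E s hs|H]; first by rewrite -E; apply: imset_f.
apply/eqP; rewrite eqEcard card_tr leqnn andbT.
by apply/subsetP=> x /imsetP[s hs ->]; apply: H.
Qed.

Lemma stab0 S : 0 \in stab S.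
Proof. by apply/stabP=> s; rewrite addr0. Qed.

Lemma stabD S g h : g \in stab S -> h \in stab S -> g + h \in stab S.
Proof. by move=> /stabP hg /stabP hh; apply/stabP=> s hs; rewrite addrA; apply/hh/hg. Qed.

Lemma stabN S g : g \in stab S -> - g \in stab S.
Proof.
rewrite inE => /eqP E; apply/stabP=> s hs.
move: hs; rewrite -{1}E => /imsetP[s' hs' ->].
by rewrite addrK.
Qed.

Lemma stabB S g h : g \in stab S -> h \in stab S -> g - h \in stab S.
Proof. by move=> hg hh; apply/stabD => //; apply/stabN. Qed.

Lemma stab_mem S g s : g \in stab S -> s \in S -> s + g \in S.
Proof. by move/stabP; apply. Qed.

Lemma stab_memN S g s : g \in stab S -> s + g \in S -> s \in S.
Proof. by move=> hg hs; rewrite -(addrK g s); apply: stab_mem hs; apply: stabN. Qed.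

Lemma sadd_stab S : sadd S (stab S) = S.
Proof.
apply/eqP; rewrite eqEsubset; apply/andP; split.
- by apply/subsetP=> x /saddP[s hs [g hg ->]]; apply: stab_mem.
- by apply/subsetP=> s hs; rewrite -[s]addr0; apply: sadd_mem => //; apply: stab0.
Qed.

Lemma sadd_sub_stab S K : K \subset stab S -> sadd S K \subset S.
Proof.
move=> sK; apply/subsetP=> x /saddP[s hs [k hk ->]].
by apply: stab_mem hs; apply: (subsetP sK).
Qed.

Lemma sub_sadd S K : 0 \in K -> S \subset sadd S K.
Proof. by move=> h0; apply/subsetP=> s hs; rewrite -[s]addr0; apply: sadd_mem. Qed.

Lemma sadd_per S K : 0 \in K -> K \subset stab S -> sadd S K = S.
Proof.
by move=> h0 sK; apply/eqP; rewrite eqEsubset sadd_sub_stab // sub_sadd.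
Qed.

Lemma stab_sub_sadd S K : sadd S K \subset S -> K \subset stab S.
Proof.
move=> sS; apply/subsetP=> k hk; apply/stabP=> s hs.
by apply: (subsetP sS); apply: sadd_mem.
Qed.

Lemma stab_saddl A B : stab A \subset stab (sadd A B).
Proof.
apply/subsetP=> g hg; apply/stabP=> x /saddP[a ha [b hb ->]].
by rewrite addrAC; apply: sadd_mem => //; apply: stab_mem.
Qed.

Lemma stab_saddr A B : stab B \subset stab (sadd A B).
Proof. by rewrite saddC; apply: stab_saddl. Qed.

Lemma stabI_sub A B K : K \subset stab A -> K \subset stab B -> K \subset stab (A :&: B).
Proof.
move=> sA sB; apply/subsetP=> k hk; apply/stabP=> s; rewrite !inE => /andP[h1 h2].
by rewrite (stab_mem _ h1) ?(stab_mem _ h2) // ?(subsetP sA) ?(subsetP sB).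
Qed.

Lemma stabU_sub A B K : K \subset stab A -> K \subset stab B -> K \subset stab (A :|: B).
Proof.
move=> sA sB; apply/subsetP=> k hk; apply/stabP=> s; rewrite !inE => /orP[h|h].
- by apply/orP; left; apply: stab_mem h; apply: (subsetP sA).
- by apply/orP; right; apply: stab_mem h; apply: (subsetP sB).
Qed.

Lemma stabIU A B : stab A :&: stab B \subset stab (A :|: B).
Proof. by apply: stabU_sub; [apply: subsetIl|apply: subsetIr]. Qed.

Lemma stab_sadd_sub A B K : K \subset stab A -> K \subset stab (sadd A B).
Proof. by move=> sK; apply: subset_trans sK (stab_saddl _ _). Qed.

Lemma sadd_stabstab S : sadd (stab S) (stab S) = stab S.
Proof.
apply/eqP; rewrite eqEsubset sub_sadd ?stab0 // andbT.
by apply/subsetP=> x /saddP[g hg [h hh ->]]; apply: stabD.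
Qed.

Lemma stab_stab_sadd X S : stab S \subset stab (sadd X (stab S)).
Proof.
rewrite saddC; apply: stab_sadd_sub.
apply/subsetP=> g hg; apply/stabP=> h hh; exact: stabD.
Qed.

Lemma sadd_saddstab X S : sadd (sadd X (stab S)) (stab S) = sadd X (stab S).
Proof. by rewrite -saddA sadd_stabstab. Qed.

End Base.

Section More.
Variable G : finZmodType.
Implicit Types A B C D S P X Y K : {set G}.

Definition kn A B : Prop :=
  (#|sadd A (stab (sadd A B))| + #|sadd B (stab (sadd A B))| <= #|sadd A B| + #|stab (sadd A B)|)%N.

Lemma kn_weak A B : kn A B -> (#|A| + #|B| <= #|sadd A B| + #|stab (sadd A B)|)%N.
Proof.
move=> h; apply: leq_trans h; apply: leq_add; apply: subset_leq_card; apply: sub_sadd; exact: stab0.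
Qed.

Lemma in_coset P c u : (u \in sadd [set c] (stab P)) = (u - c \in stab P).
Proof.
apply/saddP/idP => [[c' + [k hk ->]]|hu].
- by rewrite inE => /eqP ->; rewrite addrC addKr.
- by exists c; rewrite ?inE //; exists (u - c) => //; rewrite addrC subrK.
Qed.

Lemma coset_card P c : #|sadd [set c] (stab P)| = #|stab P|.
Proof. exact: card1sadd. Qed.

Lemma coset_self P c : c \in sadd [set c] (stab P).
Proof. by rewrite in_coset subrr stab0. Qed.

Lemma stab_coset P c : stab P \subset stab (sadd [set c] (stab P)).
Proof.
apply/subsetP=> g hg; apply/stabP=> u; rewrite !in_coset => hu.
by rewrite addrAC; apply: stabD.
Qed.

Lemma sadd_coset_sub P c X K : X \subset sadd [set c] (stab P) -> K \subset stab P ->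
  sadd X K \subset sadd [set c] (stab P).
Proof.
move=> sX sK; apply: subset_trans (saddS sX (subxx K)) _.
apply: sadd_sub_stab; exact: subset_trans sK (stab_coset P c).
Qed.

Lemma saddUl X Y K : sadd (X :|: Y) K = sadd X K :|: sadd Y K.
Proof.
apply/setP=> u; rewrite inE; apply/saddP/orP.
- move=> [v]; rewrite inE => /orP[hv|hv] [k hk ->]; [left|right]; exact: sadd_mem.
- by move=> [] /saddP[v hv [k hk ->]]; exists v; rewrite ?inE ?hv ?orbT //; exists k.
Qed.

Lemma card_saddU X Y K : (#|sadd (X :|: Y) K| <= #|sadd X K| + #|sadd Y K|)%N.
Proof. by rewrite saddUl cardsU leq_subr. Qed.

Lemma stabK_absorb X P : sadd (sadd X (stab P)) (stab P) = sadd X (stab P).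
Proof. exact: sadd_saddstab. Qed.

Lemma sadd_pair X Y K : K = stab (sadd (sadd X Y) K) ->
  sadd (sadd X K) (sadd Y K) = sadd (sadd X Y) K.
Proof.
move=> hK.
rewrite -!saddA [sadd K (sadd Y K)]saddA [sadd K Y]saddC -saddA hK sadd_stabstab.
by rewrite -hK.
Qed.

Lemma deficit1 (V W x : {set G}) : V \subset W -> x \subset W -> (#|V| + #|x| <= #|V :&: x| + #|W|)%N.
Proof.
move=> sV sx.
rewrite -(cardsID x V) -(cardsID x W) (setIidPr sx) -addnA leq_add2l addnC leq_add2l.
apply: subset_leq_card; exact: setSD.
Qed.

Lemma deficit2 (V W x y : {set G}) : V \subset W -> x \subset W -> y \subset W -> x :&: y = set0 ->
  (#|V| + #|x| + #|y| <= #|V :&: x| + #|V :&: y| + #|W|)%N.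
Proof.
move=> sV sx sy dxy.
have sxy : x :|: y \subset W by rewrite subUset sx sy.
have h := deficit1 sV sxy; move: h.
rewrite cardsU dxy cards0 subn0 addnA setIUr => h; apply: leq_trans h _.
rewrite leq_add2r; rewrite cardsU; exact: leq_subr.
Qed.

Lemma sadd_pairK P X Y :
  sadd (sadd X (stab P)) (sadd Y (stab P)) = sadd (sadd X Y) (stab P).
Proof.
rewrite -!saddA; congr (sadd X _).
by rewrite saddA [sadd (stab P) Y]saddC -saddA sadd_stabstab.
Qed.

Lemma stab_sub_coset P S c : S \subset sadd [set c] (stab P) -> S != set0 ->
  stab S \subset stab P.
Proof.
move=> sS /set0Pn[s hs]; apply/subsetP=> g hg.
have h1 : s \in sadd [set c] (stab P) by exact: (subsetP sS).
have h2 : s + g \in sadd [set c] (stab P) by apply: (subsetP sS); apply: stab_mem.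
rewrite in_coset in h1; rewrite in_coset in h2.
have -> : g = s + g - c - (s - c) by rewrite opprB addrA subrK addrC addKr.
exact: stabB h2 h1.
Qed.

End More.


Section Cos.
Variable G : finZmodType.
Implicit Types A B C D S P X Y K U : {set G}.

Lemma coset_add P c1 c2 u1 u2 : u1 \in sadd [set c1] (stab P) -> u2 \in sadd [set c2] (stab P) ->
  u1 + u2 \in sadd [set c1 + c2] (stab P).
Proof.
rewrite !in_coset => h1 h2.
have -> : u1 + u2 - (c1 + c2) = (u1 - c1) + (u2 - c2) by rewrite opprD addrACA.
exact: stabD.
Qed.

Lemma coset_eq P c1 c2 : c2 - c1 \in stab P -> sadd [set c1] (stab P) = sadd [set c2] (stab P).
Proof.
move=> h; apply/setP=> u; rewrite !in_coset.
apply/idP/idP => hu.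
- have -> : u - c2 = (u - c1) - (c2 - c1) by rewrite opprB addrA subrK.
  exact: stabB.
- have -> : u - c1 = (u - c2) + (c2 - c1) by rewrite addrA subrK.
  exact: stabD.
Qed.

Lemma coset_disj P c1 c2 : c2 - c1 \notin stab P ->
  sadd [set c1] (stab P) :&: sadd [set c2] (stab P) = set0.
Proof.
move=> h; apply/setP=> u; rewrite !inE !in_coset; apply/negbTE/negP=> /andP[h1 h2].
apply: (negP h); have -> : c2 - c1 = (u - c1) - (u - c2) by apply/esym; rewrite opprB addrC addrA subrK.
exact: stabB.
Qed.

Lemma saddI_sub U Y K : K \subset stab Y -> sadd U K :&: Y \subset sadd (U :&: Y) K.
Proof.
move=> sK; apply/subsetP=> v; rewrite inE => /andP[/saddP[u hu [k hk ->]] hv].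
apply: sadd_mem => //; rewrite inE hu /=.
apply: stab_memN hv; exact: (subsetP sK).
Qed.

Lemma coset_sub_sadd P U c : c \in U -> sadd [set c] (stab P) \subset sadd U (stab P).
Proof. by move=> hc; apply: saddS; rewrite ?sub1set. Qed.

End Cos.

Section UL.
Variable G : finZmodType.
Variables (P A B : {set G}) (a b h0 : G).
Local Notation H := (stab P).
Hypotheses (ha : a \in A) (hb : b \in B) (hh0 : h0 \in H).
Local Notation x := (sadd [set a] H).
Local Notation y := (sadd [set b] H).
Local Notation q := (sadd [set a + b] H).
Local Notation Ax := (A :&: x).
Local Notation Bx := (B :&: x).
Local Notation Ay := (A :&: y).
Local Notation By := (B :&: y).
Local Notation D1 := (sadd Ax By).
Local Notation D2 := (sadd Ay Bx).
Local Notation D := (D1 :|: D2).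
Local Notation K := (stab D).
Local Notation U := (A :|: B).
Hypothesis hw : a + b + h0 \notin D.
Hypothesis IHD : forall X Y : {set G}, X != set0 -> Y != set0 -> (#|sadd X Y| <= #|D|)%N -> kn X Y.

Lemma D_sub_q : D \subset q.
Proof.
apply/subsetP=> u; rewrite inE => /orP[] /saddP[u1 h1 [u2 h2 ->]].
- move: h1 h2; rewrite !inE => /andP[_ h1] /andP[_ h2]; exact: coset_add.
- move: h1 h2; rewrite !inE => /andP[_ h1] /andP[_ h2]; rewrite [a + b]addrC.
  exact: coset_add.
Qed.

Lemma ab_in_D1 : a + b \in D1.
Proof. by apply: sadd_mem; rewrite inE ?ha ?hb coset_self. Qed.

Lemma D_neq0 : D != set0.
Proof. by apply/set0Pn; exists (a + b); rewrite inE ab_in_D1. Qed.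

Lemma K_sub_H : K \subset H.
Proof. exact: stab_sub_coset D_sub_q D_neq0. Qed.

Lemma w_in_q : a + b + h0 \in q.
Proof. by rewrite in_coset addrAC subrr add0r. Qed.

Lemma pairIH X Y : X != set0 -> Y != set0 -> sadd X Y \subset D ->
  (#|sadd X K| + #|sadd Y K| <= #|sadd (sadd X Y) K| + #|stab (sadd (sadd X Y) K)|)%N.
Proof.
move=> hX hY sXY.
have e := sadd_pairK D X Y.
have hS : sadd (sadd X Y) K \subset D.
  by rewrite -{2}(sadd_stab D); apply: saddS.
have hXK : sadd X K != set0.
  by move: hX; apply: contraNN; rewrite sadd_eq0 => /orP[//|/eqP E]; have := stab0 D; rewrite E inE.
have hYK : sadd Y K != set0.
  by move: hY; apply: contraNN; rewrite sadd_eq0 => /orP[//|/eqP E]; have := stab0 D; rewrite E inE.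
have h := IHD hXK hYK; rewrite e in h.
by have := kn_weak (h (subset_leq_card hS)); rewrite e.
Qed.

Lemma aU : a \in U. Proof. by rewrite inE ha. Qed.
Lemma bU : b \in U. Proof. by rewrite inE hb orbT. Qed.

Lemma Vx_bound c : (#|sadd U K :&: sadd [set c] H| <=
   #|sadd (A :&: sadd [set c] H) K| + #|sadd (B :&: sadd [set c] H) K|)%N.
Proof.
have KH := K_sub_H.
apply: leq_trans (subset_leq_card (saddI_sub U (subset_trans KH (stab_coset P c)))) _.
by rewrite setIUl; apply: card_saddU.
Qed.

Lemma D1_sub : D1 \subset D. Proof. exact: subsetUl. Qed.
Lemma D2_sub : D2 \subset D. Proof. exact: subsetUr. Qed.

Lemma Ax_neq0 : Ax != set0. Proof. by apply/set0Pn; exists a; rewrite inE ha coset_self. Qed.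
Lemma By_neq0 : By != set0. Proof. by apply/set0Pn; exists b; rewrite inE hb coset_self. Qed.

Lemma union_lemma : (#|sadd U K| + #|H| <= #|sadd U H| + #|D| + #|K|)%N.
Proof.
have KH := K_sub_H.
have sVW : sadd U K \subset sadd U H by apply: saddS.
have sxW := coset_sub_sadd P aU.
have syW := coset_sub_sadd P bU.
have cx := coset_card P a; have cy := coset_card P b.
have vx := Vx_bound a; have vy := Vx_bound b.
case: (boolP (b - a \in H)) => hab.
- have e := coset_eq hab.
  have d1 := deficit1 sVW sxW.
  have eBy : By = Bx by rewrite e.
  have eAy : Ay = Ax by rewrite e.
  have eD : D = sadd Ax Bx by rewrite eBy eAy setUid.
  have hBx : Bx != set0 by rewrite -eBy By_neq0.
  have sAB : sadd Ax Bx \subset D by rewrite eD subxx.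
  have p := pairIH Ax_neq0 hBx sAB.
  rewrite -eD sadd_stab in p.
  by mlia.
- have dxy := coset_disj hab.
  have d2 := deficit2 sVW sxW syW dxy.
  have vyH : (#|sadd U K :&: y| <= #|H|)%N by rewrite -cy; apply: subset_leq_card; apply: subsetIr.
  have vxH : (#|sadd U K :&: x| <= #|H|)%N by rewrite -cx; apply: subset_leq_card; apply: subsetIr.
  have p := pairIH Ax_neq0 By_neq0 D1_sub.
  case: (boolP (Bx == set0)) => [/eqP hBx|hBx].
    have eD : D = D1 by rewrite hBx sadds0 setU0.
    have eS : sadd D1 K = D by rewrite -{1}eD sadd_stab.
    rewrite eS in p.
    have e0 : sadd Bx K = set0 by rewrite hBx sadd0s.
    rewrite e0 cards0 addn0 in vx.
    by mlia.
  case: (boolP (Ay == set0)) => [/eqP hAy|hAy].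
    have eD : D = D1 by rewrite hAy sadd0s setU0.
    have eS : sadd D1 K = D by rewrite -{1}eD sadd_stab.
    rewrite eS in p.
    have e0 : sadd Ay K = set0 by rewrite hAy sadd0s.
    rewrite e0 cards0 add0n in vy.
    by mlia.
  have p2 := pairIH hAy hBx D2_sub.
  set S1 := sadd D1 K in p; set S2 := sadd D2 K in p2.
  have eS : S1 :|: S2 = D by rewrite /S1 /S2 -saddUl sadd_stab.
  have cS := cardsUI S1 S2; rewrite eS in cS.
  set w := a + b + h0.
  have wq := w_in_q.
  have sS1 : S1 \subset D by rewrite -eS subsetUl.
  have sS2 : S2 \subset D by rewrite -eS subsetUr.
  have S1n : S1 != set0.
    by apply/set0Pn; exists (a + b); rewrite -[a + b]addr0; apply: sadd_mem; [exact: ab_in_D1|exact: stab0].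
  have S2n : S2 != set0.
    move: hAy hBx => /set0Pn[u hu] /set0Pn[v hv].
    by apply/set0Pn; exists (u + v); rewrite -[u + v]addr0; apply: sadd_mem; [exact: sadd_mem|exact: stab0].
  have M1H : stab S1 \subset H := stab_sub_coset (subset_trans sS1 D_sub_q) S1n.
  have M2H : stab S2 \subset H := stab_sub_coset (subset_trans sS2 D_sub_q) S2n.
  set m1 := sadd [set w] (stab S1); set m2 := sadd [set w] (stab S2).
  have cm1 : #|m1| = #|stab S1| := coset_card S1 w.
  have cm2 : #|m2| = #|stab S2| := coset_card S2 w.
  have wS : forall S : {set G}, S \subset D -> forall u, u \in sadd [set w] (stab S) -> u \notin S.
    move=> S sS u; rewrite in_coset => hu; apply/negP=> uS.
    have : w \in S by apply: (stab_memN (g := u - w)) => //; rewrite addrC subrK.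
    by move/(subsetP sS); apply/negP.
  have m12 : m1 :&: m2 \subset sadd [set w] K.
    apply/subsetP=> u; rewrite inE /m1 /m2 !in_coset => /andP[h1 h2].
    rewrite -eS; apply: (subsetP (stabIU S1 S2)); by rewrite inE h1 h2.
  have cm12 : (#|m1 :&: m2| <= #|K|)%N.
    by rewrite -(coset_card D w); apply: subset_leq_card.
  have cmU := cardsUI m1 m2.
  have mq : m1 :|: m2 \subset q.
    by rewrite subUset !sadd_coset_sub // sub1set.
  have Iq : S1 :&: S2 \subset q by apply: subset_trans (subsetIl _ _) (subset_trans sS1 D_sub_q).
  have disj : (m1 :|: m2) :&: (S1 :&: S2) = set0.
    apply/setP=> u; rewrite !inE; apply/negbTE/negP => /andP[/orP[hu|hu] /andP[u1 u2]].
    - by move: (wS S1 sS1 u hu); rewrite u1.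
    - by move: (wS S2 sS2 u hu); rewrite u2.
  have cq : (#|m1 :|: m2| + #|S1 :&: S2| <= #|H|)%N.
    rewrite -(coset_card P (a + b)) -cardsUI disj cards0 addn0; apply: subset_leq_card.
    by rewrite subUset mq Iq.
  by mlia.
Qed.

End UL.


Section Core.
Variable G : finZmodType.
Implicit Types A B C D S P X Y K U : {set G}.

Definition mu (X Y : {set G}) : nat := (#|sadd X Y| * #|G|.+1 + #|sadd Y (stab (sadd X Y))|)%N.

Lemma mu_lt X Y A B : (#|sadd X Y| < #|sadd A B|)%N -> (mu X Y < mu A B)%N.
Proof.
move=> h; rewrite /mu.
have h1 : (#|sadd Y (stab (sadd X Y))| <= #|G|)%N by apply: max_card.
have h2 : ((#|sadd X Y|).+1 * #|G|.+1 <= #|sadd A B| * #|G|.+1)%N by rewrite leq_mul2r h orbT.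
rewrite mulSn in h2. apply: leq_trans _ (leq_addr _ _). apply: leq_trans _ h2.
by rewrite addnC ltn_add2r ltnS.
Qed.

Lemma stab_tr S g : stab (sadd S [set g]) = stab S.
Proof.
apply/setP=> k; apply/stabP/stabP => h s hs.
- have : s + g \in sadd S [set g] by apply: sadd_mem; rewrite ?inE.
  move/h; rewrite sadd1 => /imsetP[s' hs' e].
  by move: e; rewrite addrAC => /addIr ->.
- move: hs; rewrite sadd1 => /imsetP[s' hs' ->].
  by rewrite addrAC; apply: imset_f; apply: h.
Qed.

Section Core2.
Variables (A B : {set G}) (a0 b1 : G).
Local Notation S := (sadd A B).
Local Notation L := (stab (sadd A B)).
Local Notation I := (A :&: B).
Local Notation U := (A :|: B).
Hypotheses (hAL : L \subset stab A) (hBL : L \subset stab B).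
Hypotheses (ha0A : a0 \in A) (ha0B : a0 \in B) (hb1B : b1 \in B) (hb1A : b1 \notin A).
Hypothesis IH : forall X Y : {set G}, X != set0 -> Y != set0 -> (mu X Y < mu A B)%N -> kn X Y.

Definition conv (C : {set G}) : bool :=
  [&& C \subset S, C != set0, L \subset stab C &
      (#|I| + #|sadd U (stab C)| <= #|C| + #|stab C|)%N].

Lemma UI_sub : sadd U I \subset S.
Proof.
apply/subsetP=> v /saddP[u hu [i hi ->]]; move: hi; rewrite inE => /andP[iA iB].
move: hu; rewrite inE => /orP[uA|uB]; first exact: sadd_mem.
by rewrite addrC; apply: sadd_mem.
Qed.

Lemma muAB : mu A B = (#|S| * #|G|.+1 + #|B|)%N.
Proof. by rewrite /mu (sadd_per (stab0 _) hBL). Qed.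

Lemma conv0 : conv (sadd U I).
Proof.
apply/and4P; split.
- exact: UI_sub.
- by apply/set0Pn; exists (a0 + a0); apply: sadd_mem; rewrite inE ?ha0A ?ha0B.
- by apply: stab_sadd_sub; apply: stabU_sub.
- have hU : U != set0 by apply/set0Pn; exists a0; rewrite inE ha0A.
  have hI : I != set0 by apply/set0Pn; exists a0; rewrite inE ha0A ha0B.
  have hmu : (mu U I < mu A B)%N.
    case: (ltnP #|sadd U I| #|S|) => hlt; first exact: mu_lt.
    have e : sadd U I = S by apply/eqP; rewrite eqEcard UI_sub hlt.
    rewrite muAB /mu e ltn_add2l (sadd_per (stab0 _) (stabI_sub hAL hBL)).
    apply: proper_card; rewrite properE subsetIr /=; apply/subsetPn; exists b1 => //.
    by rewrite inE (negbTE hb1A).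
  have := IH hU hI hmu; rewrite /kn => h.
  apply: leq_trans _ h; rewrite addnC leq_add2l.
  by apply: subset_leq_card; apply: sub_sadd; apply: stab0.
Qed.

Lemma core_ineq : (#|A| + #|B| <= #|S| + #|L|)%N.
Proof.
case: (arg_minnP (fun C => #|stab C|) conv0) => C hC Cmin.
move: (hC) => /and4P[CS Cn LC Cineq].
case: (boolP (stab C \subset L)) => [HL|nHL].
  have eH : stab C = L by apply/eqP; rewrite eqEsubset HL LC.
  rewrite eH (sadd_per (stab0 _) (stabU_sub hAL hBL)) in Cineq.
  have cUI := cardsUI A B.
  have cCS := subset_leq_card CS.
  by mlia.
exfalso.
have [h0 hh0 nh0] := subsetPn nHL.
have [z zS zh] : exists2 z, z \in S & z + h0 \notin S.
  case: (boolP [exists z in S, z + h0 \notin S]) => [/exists_inP[z zS zh]|/exists_inPn hall].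
    by exists z.
  by case/negP: nh0; apply/stabP => s hs; have := hall s hs; rewrite negbK.
case/saddP: zS zh => a ha [b hb ->] zh.
set H := stab C.
set x := sadd [set a] H; set y := sadd [set b] H; set q := sadd [set a + b] H.
set D := sadd (A :&: x) (B :&: y) :|: sadd (A :&: y) (B :&: x).
have DS : D \subset S.
  by rewrite subUset !saddS // ?subsetIl.
have hw : a + b + h0 \notin D by apply: contra zh; apply: (subsetP DS).
have wq : a + b + h0 \in q by rewrite in_coset addrAC subrr add0r.
have Dq : D \subset q by exact: D_sub_q.
have qC : q :&: C = set0.
  apply/setP=> v; rewrite !inE; apply/negbTE/negP => /andP[vq vC].
  case/negP: zh; apply: (subsetP CS).
  have -> : a + b + h0 = v + ((a + b + h0) - v) by rewrite [v + _]addrC subrK.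
  apply: stab_mem vC; rewrite in_coset in vq; rewrite in_coset in wq.
  have -> : a + b + h0 - v = (a + b + h0 - (a + b)) - (v - (a + b)).
    by apply/esym; rewrite opprB addrA subrK.
  exact: stabB.
have DC : D :&: C = set0.
  apply/setP=> v; rewrite [v \in D :&: C]inE [v \in set0]inE; apply/negbTE/negP => /andP[vD vC].
  by move: qC => /setP/(_ v); rewrite !inE vC (subsetP Dq v vD).
have cD : (#|D| < #|S|)%N.
  have : (#|D| + #|C| <= #|S|)%N.
    by rewrite -cardsUI DC cards0 addn0; apply: subset_leq_card; rewrite subUset DS CS.
  move/set0Pn: Cn => [c cC]; have : (0 < #|C|)%N by apply/card_gt0P; exists c.
  by move=> h1 h2; mlia.
have IHD : forall X Y : {set G}, X != set0 -> Y != set0 -> (#|sadd X Y| <= #|D|)%N -> kn X Y.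
  by move=> X Y hX hY hXY; apply: IH => //; apply: mu_lt; apply: leq_ltn_trans hXY cD.
have UL := union_lemma ha hb hh0 hw IHD.
have KH : stab D \subset H by exact: K_sub_H.
have abD : a + b \in D by rewrite inE ab_in_D1.
set C' := C :|: D.
have eK : stab C' = stab D.
  apply/eqP; rewrite eqEsubset; apply/andP; split; last first.
    apply: subset_trans (stabIU C D); rewrite subsetI KH subxx //.
  apply/subsetP=> g hg.
  have abC' : a + b \in C' by rewrite inE abD orbT.
  have gH : g \in H.
    case/setUP: (stab_mem hg abC') => [abgC|abgD].
      exfalso.
      have wgC : a + b + h0 + g \in C'.
        by rewrite inE; apply/orP; left; rewrite addrAC; apply: stab_mem abgC.
      have : a + b + h0 \in C' by apply: stab_memN wgC.
      case/setUP => [wC|wD]; last by move: hw; rewrite wD.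
      by move: qC => /setP/(_ (a + b + h0)); rewrite !inE wq wC.
    have := subsetP Dq _ abgD; by rewrite in_coset addrAC subrr add0r.
  apply/stabP=> d dD.
  have dgq : d + g \in q.
    exact: (stab_mem (subsetP (stab_coset C (a + b)) g gH) (subsetP Dq d dD)).
  have : d + g \in C' by apply: stab_mem hg _; rewrite inE dD orbT.
  case/setUP => // dgC.
  by move: qC => /setP/(_ (d + g)); rewrite !inE dgq dgC.
have Kp : stab D \proper H.
  rewrite properE KH /=; apply/subsetPn; exists h0 => //.
  by apply: contra hw => hk; apply: stab_mem hk abD.
have cK := proper_card Kp.
have LD : L \subset stab D.
  have Lx := subset_trans LC (stab_coset C a).
  have Ly := subset_trans LC (stab_coset C b).
  by apply: stabU_sub; apply: stab_sadd_sub; apply: stabI_sub.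
have cC' : #|C'| = (#|C| + #|D|)%N by rewrite cardsU setIC DC cards0 subn0.
have convC' : conv C'.
  apply/and4P; split.
  - by rewrite subUset CS DS.
  - by apply: contraNN Cn; rewrite -subset0 => /(subset_trans (subsetUl C D)); rewrite subset0.
  - by rewrite eK.
  - rewrite eK cC'; unfold C', D, q, x, y, H in *; by mlia.
have := Cmin C' convC'; rewrite eK => h; unfold C', D, q, x, y, H in *; by mlia.
Qed.

End Core2.

Theorem kneser (A B : {set G}) : A != set0 -> B != set0 -> kn A B.
Proof.
have [n] := ubnP (mu A B); elim: n A B => // n IHn A B hlt hA hB.
have IH : forall X Y : {set G}, X != set0 -> Y != set0 -> (mu X Y < mu A B)%N -> kn X Y.
  by move=> X Y hX hY hXY; apply: IHn => //; apply: leq_trans hXY _; rewrite -ltnS.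
rewrite /kn.
set S := sadd A B; set L := stab S.
set A' := sadd A L; set B' := sadd B L.
have eS : sadd A' B' = S by rewrite /A' /B' /L sadd_pairK sadd_stab.
have LA' : L \subset stab A' by apply: stab_stab_sadd.
have LB' : L \subset stab B' by apply: stab_stab_sadd.
move/set0Pn: (hB) => [b0 b0B].
have b0B' : b0 \in B' by rewrite -[b0]addr0; apply: sadd_mem => //; exact: stab0.
case: (boolP [forall b in B', b - b0 \in L]) => [/forall_inP hall|/forall_inPn[b bB' nbL]].
  have c1 : (#|A'| <= #|S|)%N by rewrite -eS; apply: leq_card_sadd b0B'.
  have c2 : (#|B'| <= #|L|)%N.
    rewrite -(coset_card S b0); apply: subset_leq_card; apply/subsetP=> b bB.
    by rewrite in_coset; apply: hall.
  by rewrite leq_add.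
have [a aA' nab] : exists2 a, a \in A' & a + (b - b0) \notin A'.
  case: (boolP [exists a in A', a + (b - b0) \notin A']) => [/exists_inP[a ha hna]|/exists_inPn hall].
    by exists a.
  case/negP: nbL; have := subsetP (stab_saddl A' B'); rewrite eS => sub; apply: sub.
  by apply/stabP=> s hs; have := hall s hs; rewrite negbK.
set g := a - b0.
set B'' := sadd B' [set g].
have eS'' : sadd A' B'' = sadd S [set g] by rewrite /B'' saddA eS.
have eL : stab (sadd A' B'') = L by rewrite eS'' stab_tr.
have cB : #|B''| = #|B'| by rewrite card_sadd1.
have LB'' : L \subset stab B'' by rewrite /B'' stab_tr.
have aB'' : a \in B'' by rewrite /B'' sadd1; apply/imsetP; exists b0 => //; rewrite /g addrC subrK.
have bgB'' : b + g \in B'' by apply: sadd_mem; rewrite ?inE.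
have bgA : b + g \notin A' by rewrite /g addrCA.
have IH' : forall X Y : {set G}, X != set0 -> Y != set0 -> (mu X Y < mu A' B'')%N -> kn X Y.
  move=> X Y hX hY hXY; apply: IH => //; apply: leq_trans hXY _.
  rewrite /mu eL eS'' card_sadd1 (sadd_per (stab0 _) LB'') cB /B' /L /S.
  by rewrite /mu leqnn.
have hAL' : stab (sadd A' B'') \subset stab A' by rewrite eL.
have hBL' : stab (sadd A' B'') \subset stab B'' by rewrite eL.
have h := core_ineq hAL' hBL' aA' aB'' bgB'' bgA IH'.
by move: h; rewrite eL cB eS'' card_sadd1.
Qed.

End Core.


Section App.
Variable G : finZmodType.
Implicit Types A B S P X : {set G}.

Lemma sumsetS r A : sumset r.+1 A = sadd (sumset r A) (A0 A).
Proof. by []. Qed.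

Lemma sumset_A0 r A B : A0 A = A0 B -> sumset r A = sumset r B.
Proof. by move=> e; elim: r => //= r ->; rewrite e. Qed.

Lemma period_stab S : period S = stab S.
Proof. by []. Qed.

Lemma A0_id A : 0 \in A -> A0 A = A.
Proof. by move=> h; rewrite /A0; apply/setP=> x; rewrite !inE; case: eqP => // ->. Qed.

Lemma sumset_per r A P : 0 \in A -> (0 < r)%N ->
  sumset r (sadd A (stab P)) = sadd (sumset r A) (stab P).
Proof.
move=> h0; have h0' : 0 \in sadd A (stab P) by rewrite -[0]addr0; apply: sadd_mem => //; exact: stab0.
elim: r => // r IHr _; rewrite !sumsetS !A0_id //.
case: r IHr => [_|r IHr].
  by rewrite saddA.
by rewrite IHr // sadd_pairK.
Qed.

Lemma zero_sumset r A : 0 \in sumset r A.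
Proof.
elim: r => [|r IHr]; first by rewrite /= inE.
by rewrite sumsetS -[0]addr0; apply: sadd_mem => //; rewrite /A0 !inE eqxx.
Qed.

Lemma key rho A : (2 <= rho)%N -> aperiodic A -> rho_maximal rho A ->
  (2 <= #|G|)%N /\ (#|A|.-1 * rho.-1 <= #|G| - 2)%N.
Proof.
move=> hrho hap /andP[hne /forallP hall].
set k := rho.-1.
have hk : (1 <= k)%N by rewrite /k; case: rho hrho {k hne hall} => // [[]].
have h0 : 0 \in A.
  apply: contraNT hne => n0.
  have e : A0 (0 |: A) = A0 A by rewrite /A0 setUA setUid.
  have pr : A \proper 0 |: A.
    by rewrite properE subsetUr /=; apply/subsetPn; exists 0; rewrite ?inE ?eqxx.
  by move: (hall (0 |: A)); rewrite pr /= (sumset_A0 _ e).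
have eA := A0_id h0.
set P := stab (sumset k A).
have hP : P \subset [set 0].
  have e1 : sumset k (sadd A P) = sumset k A by rewrite sumset_per // sadd_stab.
  have sAA' : A \subset sadd A P by apply: sub_sadd; exact: stab0.
  have eAA : sadd A P = A.
    apply/eqP; rewrite eqEsubset sAA' andbT.
    apply: contraNT hne => nsub.
    have pr : A \proper sadd A P by rewrite properE sAA'.
    by move: (hall (sadd A P)); rewrite pr /= e1.
  move: hap; rewrite /aperiodic period_stab => /eqP <-.
  by apply: stab_sub_sadd; rewrite eAA subxx.
have hstab : forall m j, (j + m = k)%N -> stab (sumset j A) \subset [set 0].
  elim=> [j|m IHm j]; first by rewrite addn0 => ->.
  rewrite addnS -addSn => /IHm; apply: subset_trans.
  by rewrite sumsetS; apply: stab_saddl.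
have An : A != set0 by apply/set0Pn; exists 0.
have grow : forall j, (j <= k)%N -> (1 + j * #|A|.-1 <= #|sumset j A|)%N.
  elim=> [|j IHj] hj; first by rewrite /= cards1.
  have := IHj (ltnW hj).
  have Sn : sumset j A != set0 by apply/set0Pn; exists 0; exact: zero_sumset.
  have kn1 := kn_weak (kneser Sn An).
  have st1 : (#|stab (sadd (sumset j A) A)| <= 1)%N.
    rewrite -(cards1 (0 : G)); apply: subset_leq_card.
    have := hstab (k - j.+1)%N j.+1; rewrite subnKC // => /(_ erefl).
    by rewrite sumsetS eA.
  rewrite sumsetS eA mulSn.
  have cA : #|A| = (#|A|.-1).+1 by rewrite prednK // card_gt0.
  by move=> hh; mlia.
have cS : (#|sumset k A| < #|G|)%N.
  rewrite -cardsT; apply: proper_card; rewrite properT; exact: hne.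
have := grow k (leqnn k).
rewrite mulnC -/k; set m := (#|A|.-1 * k)%N => hg; split; by mlia.
Qed.

End App.

Local Close Scope ring_scope.

Theorem proposition2p8 (G : finZmodType) (rho : nat) (hrho : (2 <= rho)%N) :
  ((t_rho G rho)%:Z <= divz (#|G|%:Z - 2) (rho%:Z - 1) + 1)%R.
Proof.
have hk : (0 < rho.-1)%N by case: rho hrho => // [[]].
have erho : (rho%:Z - 1 = (rho.-1)%:Z)%R by rewrite -subn1 -subzn // (leq_trans _ hrho).
rewrite erho.
have hG : (0 < #|G|)%N by apply/card_gt0P; exists 0%R.
case: (ltnP 1 #|G|) => hG2.
- have ht : (t_rho G rho <= ((#|G| - 2) %/ rho.-1).+1)%N.
    apply/bigmax_leqP => A /and3P[hap hmax _].
    have [_ hb] := key hrho hap hmax.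
    by apply: leq_trans (leqSpred _) _; rewrite ltnS leq_divRL.
  apply: Order.POrderTheory.le_trans (_ : ((((#|G| - 2) %/ rho.-1).+1)%N)%:Z <= _)%R.
    by rewrite lez_nat.
  have e2 : ((#|G|%:Z - 2) = (#|G| - 2)%N%:Z)%R by rewrite -subzn.
  rewrite e2 divz_nat -addn1 PoszD.
  exact: Order.POrderTheory.lexx.
- have eG : #|G| = 1%N by apply/eqP; rewrite eqn_leq hG2 hG.
  have t0 : t_rho G rho = 0%N.
    apply/eqP; rewrite -leqn0; apply/bigmax_leqP => A /and3P[hap hmax _].
    by have [+ _] := key hrho hap hmax; rewrite eG.
  rewrite t0 eG.
  have -> : ((1%N)%:Z - 2 = -1 :> int)%R by [].
  have hd : (0 < (rho.-1)%:Z)%R by rewrite ltz_nat.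
  have h := lez_divRL (-1)%R (-1)%R hd.
  have h1 : (-1 * (rho.-1)%:Z <= -1 :> int)%R.
    by rewrite mulN1r Num.Theory.lerN2 lez_nat.
  rewrite h1 in h.
  by rewrite -(Num.Theory.lerD2r (-1)%R) add0r addrK.
Qed.
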